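(* Let $(\Omega,\mathcal{F})$ be a measurable space, $\mathrm{B}_b$ the space of bounded real-valued measurable functions, $C\subset\mathrm{B}_b$ a linear subspace containing the constants, and $H\colon C\to\mathbb{R}$ a sublinear premium principle, i.e. a convex premium principle with $H(\lambda X)=\lambda H(X)$ for all $X\in C$, $\lambda>0$. Then $R_{\mathrm{Max}}(X):=\inf\{H(X_0)\mid X_0\in C,\ X_0\ge X\}$ is a coherent risk measure given by $$R_{\mathrm{Max}}(X)=\max_{\mathbb{P}\in\mathcal{P}}\mathbb{E}_{\mathbb{P}}(X)\quad\text{for all }X\in\mathrm{B}_b,$$ where $\mathcal{P}=\{\mathbb{P}\in\mathrm{ba}_+^1\mid \mathbb{E}_{\mathbb{P}}(X)\le H(X)\text{ for all }X\in C\}$.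
   Context: A premium principle is a map $H\colon C\to\mathbb{R}$ with $H(X+m)=H(X)+m$ for $X\in C$, $m\in\mathbb{R}$, $H(0)=0$, and $H(X)\ge0$ for $X\in C$ with $X\ge0$ (pointwise order). Convex means $H(\lambda X+(1-\lambda)Y)\le\lambda H(X)+(1-\lambda)H(Y)$ for $\lambda\in[0,1]$. $\mathrm{ba}_+^1$ is the set of finitely additive probability measures on $(\Omega,\mathcal{F})$ and $\mathbb{E}_{\mathbb{P}}$ the associated integral. *)

(* Defs.v *)
From HB Require Import structures.
From mathcomp Require Import all_boot all_order all_algebra.
From mathcomp Require Import all_classical all_reals.
From mathcomp Require Import ereal measure lebesgue_measure numfun.
From Stdlib Require List.
Set Implicit Arguments. Unset Strict Implicit. Unset Printing Implicit Defensive.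
Import Order.TTheory GRing.Theory Num.Theory.
Local Open Scope classical_set_scope.
Local Open Scope ring_scope.

Section Defs.
Context (d : measure_display) (T : measurableType d) (R : realType).

Definition Bb (X : T -> R) : Prop :=
  measurable_fun setT X /\ exists M : R, forall w, `|X w| <= M.

Definition linear_subspace_with_constants (C : set (T -> R)) : Prop :=
  [/\ C `<=` Bb,
      (forall m : R, C (fun _ => m)),
      (forall X Y, C X -> C Y -> C (fun w => X w + Y w)) &
      (forall (a : R) X, C X -> C (fun w => a * X w))].

Definition premium_principle (C : set (T -> R)) (H : (T -> R) -> R) : Prop :=
  [/\ (forall X (m : R), C X -> H (fun w => X w + m) = H X + m),
      H (fun _ => 0) = 0 &
      (forall X, C X -> (forall w, 0 <= X w) -> 0 <= H X)].

Definition convex_on (C : set (T -> R)) (H : (T -> R) -> R) : Prop :=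
  forall X Y (l : R), C X -> C Y -> 0 <= l <= 1 ->
    H (fun w => l * X w + (1 - l) * Y w) <= l * H X + (1 - l) * H Y.

Definition pos_homogeneous_on (C : set (T -> R)) (H : (T -> R) -> R) : Prop :=
  forall X (l : R), C X -> 0 < l -> H (fun w => l * X w) = l * H X.

Definition sublinear_premium_principle (C : set (T -> R)) (H : (T -> R) -> R) :=
  [/\ premium_principle C H, convex_on C H & pos_homogeneous_on C H].

Definition ba1 (P : set T -> R) : Prop :=
  [/\ (forall A, measurable A -> 0 <= P A),
      P setT = 1 &
      (forall A B, measurable A -> measurable B -> A `&` B = set0 ->
         P (A `|` B) = P A + P B)].

Definition simple_eval (s : seq (R * set T)) (w : T) : R :=
  \sum_(p <- s) p.1 * \1_(p.2) w.

Definition simple_int (P : set T -> R) (s : seq (R * set T)) : R :=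
  \sum_(p <- s) p.1 * P p.2.

Definition simple_below (X : T -> R) (s : seq (R * set T)) : Prop :=
  (forall p, List.In p s -> measurable p.2) /\ (forall w, simple_eval s w <= X w).

(* E_P(X) for bounded measurable X: supremum of integrals of measurable
   simple functions below X (the standard finitely additive integral) *)
Definition expect (P : set T -> R) (X : T -> R) : R :=
  sup [set simple_int P s | s in simple_below X].

Definition RMax (C : set (T -> R)) (H : (T -> R) -> R) (X : T -> R) : \bar R :=
  ereal_inf [set (H X0)%:E | X0 in [set X0 | C X0 /\ forall w, X w <= X0 w]].

Definition coherent_risk_measure (rho : (T -> R) -> R) : Prop :=
  [/\ (forall X Y, Bb X -> Bb Y -> (forall w, X w <= Y w) -> rho X <= rho Y),
      (forall X (m : R), Bb X -> rho (fun w => X w + m) = rho X + m),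
      rho (fun _ => 0) = 0,
      (forall X Y (l : R), Bb X -> Bb Y -> 0 <= l <= 1 ->
         rho (fun w => l * X w + (1 - l) * Y w) <= l * rho X + (1 - l) * rho Y) &
      (forall X (l : R), Bb X -> 0 < l -> rho (fun w => l * X w) = l * rho X)].

Definition Pset (C : set (T -> R)) (H : (T -> R) -> R) : set (set T -> R) :=
  [set P | ba1 P /\ forall X, C X -> expect P X <= H X].

End Defs.

(* Main.v *)
Require Import Defs.
From HB Require Import structures.
From mathcomp Require Import all_boot all_order all_algebra.
From mathcomp Require Import all_classical all_reals.
From mathcomp Require Import ereal measure lebesgue_measure numfun.
From mathcomp Require Import ring lra lebesgue_stieltjes_measure.
From Stdlib Require List.
Import Order.TTheory GRing.Theory Num.Theory.
Local Open Scope classical_set_scope.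
Local Open Scope ring_scope.
Set Implicit Arguments. Unset Strict Implicit. Unset Printing Implicit Defensive.
Section PartA.
Context (d : measure_display) (T : measurableType d) (R : realType)
  (C : set (T -> R)) (H : (T -> R) -> R).
Context (hC : linear_subspace_with_constants C)
  (hH : sublinear_premium_principle C H).

Definition bnd (X : T -> R) := exists M : R, forall w, `|X w| <= M.

Let CBb X : C X -> Bb X. Proof. by case: hC => + _ _ _; apply. Qed.
Let Ccst m : C (fun _ => m). Proof. by case: hC. Qed.
Let CD X Y : C X -> C Y -> C (fun w => X w + Y w). Proof. by case: hC => _ _ + _; apply. Qed.
Let CZ a X : C X -> C (fun w => a * X w). Proof. by case: hC => _ _ _; apply. Qed.
Let Htr X m : C X -> H (fun w => X w + m) = H X + m.
Proof. by case: hH => -[+ _ _] _ _; apply. Qed.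
Let H0 : H (fun _ => 0) = 0. Proof. by case: hH => -[]. Qed.
Let Hpos X : C X -> (forall w, 0 <= X w) -> 0 <= H X.
Proof. by case: hH => -[_ _ +] _ _; apply. Qed.
Let Hcvx : convex_on C H. Proof. by case: hH. Qed.
Let Hhom : pos_homogeneous_on C H. Proof. by case: hH. Qed.

Lemma Hcst m : H (fun _ => m) = m.
Proof.
have -> : (fun _ : T => m) = (fun w => (fun _ => 0) w + m) by apply/funext => w /=; rewrite add0r.
by rewrite Htr // H0 add0r.
Qed.

Lemma Hsub X Y : C X -> C Y -> H (fun w => X w + Y w) <= H X + H Y.
Proof.
move=> CX CY.
have := Hcvx (l := 2^-1) (CZ 2 CX) (CZ 2 CY).
have h2 : 0 <= (2:R)^-1 <= 1 by apply/andP; split; lra.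
move=> /(_ h2).
have h20 : (0:R) < 2 by lra.
rewrite !Hhom //.
have -> : (fun w => 2^-1 * (2 * X w) + (1 - 2^-1) * (2 * Y w)) = (fun w => X w + Y w).
  by apply/funext => w; field.
move=> h; apply: le_trans h _; lra.
Qed.


Lemma bnd_le X : bnd X -> exists M, forall w, -M <= X w /\ X w <= M.
Proof. by case=> M hM; exists M => w; have := hM w; rewrite ler_norml => /andP. Qed.

Lemma RMax_fin X : bnd X -> RMax C H X \is a fin_num.
Proof.
move=> /bnd_le [M hM].
have up : (RMax C H X <= M%:E)%E.
  apply: ge_ereal_inf; exists (H (fun _ => M))%:E; last by rewrite Hcst.
  by exists (fun _ => M) => //; split => // w; case: (hM w).
have lo : ((-M)%:E <= RMax C H X)%E.
  apply: le_ereal_inf_tmp => _ [X0 [CX0 hX] <-]; rewrite lee_fin.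
  have : 0 <= H (fun w => X0 w + M).
    by apply: Hpos => [|w]; [exact: CD|have [h1 _] := hM w; have := hX w; lra].
  rewrite Htr //; lra.
rewrite fin_numE; apply/andP; split; apply/eqP => h; rewrite h in up lo => //.
Qed.

Definition p X := fine (RMax C H X).

Lemma p_le X X0 : bnd X -> C X0 -> (forall w, X w <= X0 w) -> p X <= H X0.
Proof.
move=> bX CX0 hX; rewrite -lee_fin /p fineK; last exact: RMax_fin.
by apply: ereal_inf_lbound; exists X0.
Qed.

Lemma p_ge X r : bnd X ->
  (forall X0, C X0 -> (forall w, X w <= X0 w) -> r <= H X0) -> r <= p X.
Proof.
move=> bX hr; rewrite -lee_fin /p fineK; last exact: RMax_fin.
by apply: le_ereal_inf_tmp => _ [X0 [CX0 hX] <-]; rewrite lee_fin; apply: hr.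
Qed.
Lemma bndD X Y : bnd X -> bnd Y -> bnd (fun w => X w + Y w).
Proof.
move=> [M hM] [N hN]; exists (M + N) => w.
by apply: le_trans (ler_normD _ _) _; apply: lerD.
Qed.
Lemma bndZ a X : bnd X -> bnd (fun w => a * X w).
Proof.
move=> [M hM]; exists (`|a| * M) => w; rewrite normrM.
by apply: ler_wpM2l => //.
Qed.
Lemma bndC m : bnd (fun _ => m).
Proof. by exists `|m|. Qed.
Lemma Cbnd X : C X -> bnd X.
Proof. by move=> /CBb [_ [M hM]]; exists M. Qed.

Lemma p_mono X Y : bnd X -> bnd Y -> (forall w, X w <= Y w) -> p X <= p Y.
Proof.
move=> bX bY XY; apply: p_ge => // X0 CX0 hX; apply: p_le => // w.
exact: le_trans (XY w) (hX w).
Qed.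

Lemma p_tr X m : bnd X -> p (fun w => X w + m) = p X + m.
Proof.
move=> bX; have bXm := bndD bX (bndC m).
apply/eqP; rewrite eq_le; apply/andP; split.
  rewrite -lerBlDr; apply: p_ge => // X0 CX0 hX; rewrite lerBlDr -Htr //.
  by apply: p_le => //; [exact: CD | move=> w; rewrite lerD2r].
apply: p_ge => // X0 CX0 hX; rewrite -lerBrDr.
have -> : H X0 - m = H (fun w => X0 w + - m) by rewrite Htr.
apply: p_le => //; first exact: CD.
by move=> w; have := hX w; lra.
Qed.

Lemma p0 : p (fun _ => 0) = 0.
Proof.
apply/eqP; rewrite eq_le; apply/andP; split.
  by rewrite -{2}H0; apply: p_le => //; exact: bndC.
apply: p_ge; first exact: bndC.
by move=> X0 CX0 hX; apply: Hpos.
Qed.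

Lemma p_cst m : p (fun _ => m) = m.
Proof.
have h := p_tr m (bndC 0).
have e : (fun w : T => (fun _ : T => (0:R)) w + m) = (fun _ => m).
  by apply/funext => w /=; rewrite add0r.
by rewrite e p0 add0r in h.
Qed.

Lemma p_sub X Y : bnd X -> bnd Y -> p (fun w => X w + Y w) <= p X + p Y.
Proof.
move=> bX bY; rewrite -lerBlDr; apply: p_ge => // Y0 CY0 hY.
rewrite lerBlDr addrC -lerBlDr; apply: p_ge => // X0 CX0 hX.
rewrite lerBlDr; apply: le_trans (Hsub CX0 CY0).
apply: p_le; first exact: bndD.
  exact: CD CX0 CY0.
by move=> w; have := hX w; have := hY w; lra.
Qed.

Lemma p_hom X t : bnd X -> 0 < t -> p (fun w => t * X w) = t * p X.
Proof.
move=> bX t0; have btX := bndZ t bX.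
apply/eqP; rewrite eq_le; apply/andP; split.
  rewrite mulrC -ler_pdivrMr //; apply: (@p_ge X) => // X0 CX0 hX.
  rewrite ler_pdivrMr // [H X0 * t]mulrC -Hhom //; apply: p_le => //; first exact: CZ.
  by move=> w; rewrite ler_pM2l.
apply: p_ge => // X0 CX0 hX.
rewrite -ler_pdivlMl // -Hhom //; last by rewrite invr_gt0.
apply: p_le => //; first exact: CZ.
by move=> w; rewrite ler_pdivlMl //; exact: hX.
Qed.

Lemma p_H X : C X -> p X <= H X.
Proof. by move=> CX; apply: p_le => //; exact: Cbnd. Qed.
End PartA.
Section PartB.
Context (T : Type) (R : realType) (D : set (T -> R)) (p : (T -> R) -> R).
Context (D0 : D (fun _ => 0))
  (DD : forall x y, D x -> D y -> D (fun w => x w + y w))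
  (DZ : forall (a : R) x, D x -> D (fun w => a * x w))
  (psub : forall x y, D x -> D y -> p (fun w => x w + y w) <= p x + p y)
  (phom : forall x (t : R), D x -> 0 < t -> p (fun w => t * x w) = t * p x)
  (p0 : p (fun _ => 0) = 0).

Definition goodg (G : set ((T -> R) * R)) :=
  [/\ (forall x a, G (x, a) -> D x /\ a <= p x),
      (forall x a b, G (x, a) -> G (x, b) -> a = b),
      (forall x a y b, G (x, a) -> G (y, b) -> G (fun w => x w + y w, a + b)) &
      (forall x a (k : R), G (x, a) -> G (fun w => k * x w, k * a))].

Definition extg (G : set ((T -> R) * R)) (y : T -> R) (c : R) :=
  [set z | exists x a t, [/\ G (x, a), z.1 = (fun w => x w + t * y w) & z.2 = a + t * c]].

Lemma goodg0 G : goodg G -> G !=set0 -> G (fun _ => 0, 0).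
Proof.
move=> [_ _ _ hZ] [[x a] Gxa]; have := hZ x a 0 Gxa.
rewrite mul0r; congr (G (_, _)); apply/funext => w; by rewrite mul0r.
Qed.

Lemma sub_extg G y c : G `<=` extg G y c.
Proof.
move=> [x a] Gxa; exists x, a, 0; split => //=; last by rewrite mul0r addr0.
by apply/funext => w; rewrite mul0r addr0.
Qed.

Lemma extg_y G y c : goodg G -> G !=set0 -> extg G y c (y, c).
Proof.
move=> gG nG; exists (fun _ => 0), 0, 1; split => //=; first exact: goodg0.
  by apply/funext => w; rewrite mul1r add0r.
by rewrite mul1r add0r.
Qed.

Definition condc (G : set ((T -> R) * R)) y c :=
  forall x a, G (x, a) ->
    a - p (fun w => x w - y w) <= c /\ c <= p (fun w => x w + y w) - a.

Lemma goodg_ext G y c : goodg G -> D y -> ~ (exists a, G (y, a)) ->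
  condc G y c -> goodg (extg G y c).
Proof.
move=> gG Dy ny hc; have [hdom hfun hadd hsc] := gG.
have Dny : D (fun w => - y w).
  by have := DZ (-1) Dy; congr D; apply/funext => w; rewrite mulN1r.
split.
- move=> f b [x [a [t [Gxa /= -> ->]]]].
  have [Dx hax] := hdom _ _ Gxa.
  split; first by apply: DD => //; exact: DZ.
  case: (ltrgtP 0 t) => t0.
  + have Gs := hsc _ _ t^-1 Gxa.
    have [_ hc2] := hc _ _ Gs.
    have -> : (fun w => x w + t * y w) = (fun w => t * (t^-1 * x w + y w)).
      by apply/funext => w; rewrite mulrDr mulrA mulfV ?mul1r // gt_eqF.
    rewrite phom //; last by apply: DD => //; exact: DZ.
    have tu : t * t^-1 = 1 by rewrite mulfV // gt_eqF.
    move: hc2; set P := p _ => hc2.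
    have := ler_wpM2l (ltW t0) hc2.
    rewrite mulrBr mulrA tu mul1r; lra.
  + set s := - t; have s0 : 0 < s by rewrite /s oppr_gt0.
    have Gs := hsc _ _ s^-1 Gxa.
    have [hc1 _] := hc _ _ Gs.
    have -> : (fun w => x w + t * y w) = (fun w => s * (s^-1 * x w - y w)).
      apply/funext => w; rewrite mulrBr mulrA mulfV ?mul1r ?gt_eqF //.
      by rewrite /s mulNr opprK.
    rewrite phom //; last by apply: DD => //; exact: DZ.
    have su : s * s^-1 = 1 by rewrite mulfV // gt_eqF.
    move: hc1; set P := p _ => hc1.
    have := ler_wpM2l (ltW s0) hc1.
    rewrite mulrBr mulrA su mul1r /s; lra.
  + rewrite -t0 mul0r addr0.
    by have -> : (fun w => x w + 0 * y w) = x by apply/funext => w; rewrite mul0r addr0.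
- move=> f b b' [x [a [t [Gxa /= -> ->]]]] [x' [a' [t' [Gxa' /= e ->]]]].
  have ew w : x w + t * y w = x' w + t' * y w by rewrite -(congr1 (fun g => g w) e).
  have [tt|tt] := eqVneq t t'.
    subst t'.
    have xx : x = x' by apply/funext => w; have := ew w; lra.
    by subst x'; rewrite (hfun _ _ _ Gxa Gxa').
  exfalso; apply: ny.
  have G1 := hadd _ _ _ _ Gxa' (hsc _ _ (-1) Gxa).
  have G2 := hsc _ _ (t - t')^-1 G1.
  eexists; move: G2; congr (G (_, _)).
  apply/funext => w; have := ew w => hw.
  have nz : t - t' != 0 by rewrite subr_eq0.
  apply: (mulfI nz); rewrite mulrA mulfV // mul1r; lra.
- move=> f b g e [x [a [t [Gxa /= -> ->]]]] [x' [a' [t' [Gxa' /= -> ->]]]].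
  exists (fun w => x w + x' w), (a + a'), (t + t'); split => //=.
    by apply: hadd.
  by apply/funext => w; rewrite mulrDl; lra.
  by rewrite mulrDl; lra.
- move=> f b k [x [a [t [Gxa /= -> ->]]]].
  exists (fun w => k * x w), (k * a), (k * t); split => //=.
    by apply: hsc.
  by apply/funext => w; rewrite mulrDr mulrA.
  by rewrite mulrDr mulrA.
Qed.

Lemma DN y : D y -> D (fun w => - y w).
Proof. by move=> Dy; have := DZ (-1) Dy; congr D; apply/funext => w; rewrite mulN1r. Qed.

Lemma key_ineq G y x a x' a' : goodg G -> D y -> G (x, a) -> G (x', a') ->
  a - p (fun w => x w - y w) <= p (fun w => x' w + y w) - a'.
Proof.
move=> [hdom hfun hadd hsc] Dy Gxa Gxa'.
have [Dx ha] := hdom _ _ Gxa; have [Dx' ha'] := hdom _ _ Gxa'.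
have [_ h] := hdom _ _ (hadd _ _ _ _ Gxa Gxa').
have := psub (DD Dx (DN Dy)) (DD Dx' Dy).
have -> : (fun w => (x w - y w) + (x' w + y w)) = (fun w => x w + x' w).
  by apply/funext => w; lra.
lra.
Qed.

Lemma exists_c G y : goodg G -> G !=set0 -> D y -> exists c, condc G y c.
Proof.
move=> gG [[x0 a0] G0] Dy.
pose S := [set r | exists x a, G (x, a) /\ r = a - p (fun w => x w - y w)].
have S0 : S !=set0 by exists (a0 - p (fun w => x0 w - y w)); exists x0, a0.
have ub x' a' : G (x', a') -> ubound S (p (fun w => x' w + y w) - a').
  by move=> Gxa' _ [x [a [Gxa ->]]]; exact: key_ineq Gxa Gxa'.
have hs : has_sup S by split => //; exists (p (fun w => x0 w + y w) - a0); exact: ub.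
exists (sup S) => x a Gxa; split.
  by apply: sup_upper_bound => //; exists x, a.
by apply: ge_sup => //; exact: ub.
Qed.

Definition G00 : set ((T -> R) * R) := [set z | z = (fun _ => 0, 0)].

Lemma goodg00 : goodg G00.
Proof.
split.
- by move=> x a [-> ->]; rewrite p0.
- by move=> x a b [_ ->] [_ ->].
- by move=> x a y b [-> ->] [-> ->]; rewrite /G00 /= addr0.
- by move=> x a k [-> ->]; rewrite /G00 /= mulr0.
Qed.

Lemma seed_graph x0 : D x0 -> exists Gs, goodg Gs /\ Gs (x0, p x0).
Proof.
move=> Dx0.
have [[a [e _]]|nx] := pselect (exists a, G00 (x0, a)).
  exists G00; split; first exact: goodg00.
  by rewrite /G00 e p0.
exists (extg G00 x0 (p x0)); split; last first.
  by apply: extg_y; [exact: goodg00 | exists (fun _ => 0, 0)].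
apply: goodg_ext => //; first exact: goodg00.
move=> x a [-> ->]; split.
  have := psub Dx0 (DN Dx0).
  have -> : (fun w => x0 w + - x0 w) = (fun _ => 0) by apply/funext => w; rewrite subrr.
  have -> : (fun w => 0 - x0 w) = (fun w => - x0 w) by apply/funext => w; rewrite sub0r.
  rewrite p0; lra.
have -> : (fun w => 0 + x0 w) = x0 by apply/funext => w; rewrite add0r.
by rewrite subr0.
Qed.

Theorem hahn_banach x0 : D x0 -> exists L : (T -> R) -> R,
  [/\ (forall x y, D x -> D y -> L (fun w => x w + y w) = L x + L y),
      (forall (k : R) x, D x -> L (fun w => k * x w) = k * L x),
      (forall x, D x -> L x <= p x) & L x0 = p x0].
Proof.
move=> Dx0.
pose P := fun G : set ((T -> R) * R) => G = set0 \/ (goodg G /\ G (x0, p x0)).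
have [A [PA Amax]] : exists A, P A /\ forall B, A `<` B -> ~ P B.
  apply: Zorn_bigcup => F FP Ftot.
  have [[G0 [FG0 [z0 G0z0]]]|nF] := pselect (exists G, F G /\ G !=set0); last first.
    left; apply/seteqP; split => // z [G FG Gz]; apply: nF; exists G; split => //.
    by exists z.
  have hF G z : F G -> G z -> goodg G /\ G (x0, p x0).
    by move=> FG Gz; case: (FP G FG) => // eG; rewrite eG in Gz.
  right; split; last first.
    by exists G0 => //; case: (hF _ _ FG0 G0z0).
  split.
  - move=> x a [G FG Gz]; have [[hd _ _ _] _] := hF _ _ FG Gz; exact: hd.
  - move=> x a b [G1 FG1 G1a] [G2 FG2 G2b].
    case: (Ftot _ _ FG1 FG2) => sub.
      have [[_ hf _ _] _] := hF _ _ FG2 G2b; apply: hf G2b; exact: sub.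
    have [[_ hf _ _] _] := hF _ _ FG1 G1a; apply: hf G1a _; exact: sub.
  - move=> x a y b [G1 FG1 G1a] [G2 FG2 G2b].
    case: (Ftot _ _ FG1 FG2) => sub.
      have [[_ _ ha _] _] := hF _ _ FG2 G2b; exists G2 => //; apply: ha G2b; exact: sub.
    have [[_ _ ha _] _] := hF _ _ FG1 G1a; exists G1 => //; apply: ha G1a _; exact: sub.
  - move=> x a k [G FG Gz]; have [[_ _ _ hs] _] := hF _ _ FG Gz.
    by exists G => //; apply: hs.
have [gA sA] : goodg A /\ A (x0, p x0).
  case: PA => // eA; exfalso.
  have [Gs [gGs sGs]] := seed_graph Dx0.
  apply: (Amax Gs); last by right.
  rewrite eA; split => // hs; have := hs _ sGs; done.
have nA : A !=set0 by exists (x0, p x0).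
have hfull y : D y -> exists a, A (y, a).
  move=> Dy; have [//|ny] := pselect (exists a, A (y, a)); exfalso.
  have [c hc] := exists_c gA nA Dy.
  apply: (Amax (extg A y c)).
    split; first exact: sub_extg.
    by move=> BA; apply: ny; exists c; apply: BA; exact: extg_y.
  right; split; first exact: goodg_ext.
  exact: sub_extg.
have [hdom hfun hadd hsc] := gA.
pose L x := sup [set a | A (x, a)].
have Lval x a : A (x, a) -> L x = a.
  move=> Axa; rewrite /L.
  have -> : [set a | A (x, a)] = [set a].
    apply/seteqP; split => b /=; first by move=> h; exact: hfun h Axa.
    by move=> ->.
  exact: sup1.
have LA x : D x -> A (x, L x).
  by move=> Dx; have [a Axa] := hfull _ Dx; rewrite (Lval _ _ Axa).
exists L; split.
- move=> x y Dx Dy; apply: Lval; exact: hadd (LA _ Dx) (LA _ Dy).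
- move=> k x Dx; apply: Lval; exact: hsc (LA _ Dx).
- by move=> x Dx; have [] := hdom _ _ (LA _ Dx).
- exact: Lval.
Qed.
End PartB.
Section PartD.
Context (d : measure_display) (T : measurableType d) (R : realType).

Lemma In_map_ex (A B : Type) (f : A -> B) (l : seq A) y :
  List.In y [seq f i | i <- l] -> exists i, y = f i.
Proof.
elim: l => //= a l IH [<-|h]; first by exists a.
exact: IH.
Qed.

Lemma approx (X : T -> R) e : measurable_fun setT X -> bnd X -> 0 < e ->
  exists s, simple_below X s /\ forall w, X w - e <= simple_eval s w.
Proof.
move=> mX /bnd_le [M hM] e0.
have M0 : 0 <= M by have [h1 h2] := hM point; lra.
pose N := (Num.truncn (M / e)).+1.
have MN : M < N%:R * e by rewrite -ltr_pdivrMr // truncnS_gt.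
pose v (i : nat) : R := (i%:R - N%:R) * e.
pose A (i : nat) := [set w | v i <= X w < v i + e].
have mA i : measurable (A i).
  have -> : A i = setT `&` X @^-1` [set` `[v i, v i + e[] .
    by apply/seteqP; split => w /=; rewrite in_itv /=; [move=> ?; split|case].
  by apply: mX => //; exact: measurable_itv.
have key w : exists i, (i < N + N)%N /\ (forall j, A j w <-> j = i).
  pose y := (X w + N%:R * e) / e.
  have [h1 h2] := hM w.
  have y0 : 0 <= y by rewrite /y divr_ge0 //; [lra | exact: ltW].
  exists (Num.truncn y); split.
    rewrite truncn_lt_nat // /y ltr_pdivrMr // natrD mulrDl; lra.
  move=> j; have -> : A j w <-> (j%:R <= y < j.+1%:R).
    have E1 : (j%:R - N%:R) * e = j%:R * e - N%:R * e by rewrite mulrBl.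
    have E2 : j.+1%:R * e = j%:R * e + e by rewrite mulrSr mulrDl mul1r.
    rewrite /A /= /y ler_pdivlMr // ltr_pdivrMr // /v E1 E2.
    split => /andP [u1 u2]; apply/andP; split; lra.
  by rewrite -truncn_eq //; split => [/eqP ->|->].
have sev w : simple_eval [seq (v i, A i) | i <- iota 0 (N + N)] w =
    \sum_(j <- iota 0 (N + N)) v j * \1_(A j) w.
  by rewrite /simple_eval big_map.
have ev w : exists i, simple_eval [seq (v i, A i) | i <- iota 0 (N + N)] w = v i /\ A i w.
  have [i [iN hi]] := key w; exists i; split; last exact/hi.
  rewrite sev (bigD1_seq i) ?iota_uniq ?mem_iota ?add0n ?iN //=.
  rewrite big1 ?addr0; first by rewrite indicE mem_set ?mulr1 //; exact/hi.
  move=> j /negP ji; rewrite indicE memNset ?mulr0 //.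
  by move=> /hi ej; apply: ji; rewrite ej.
exists [seq (v i, A i) | i <- iota 0 (N + N)]; split; last first.
  by move=> w; have [i [-> /andP [a1 a2]]] := ev w; lra.
split; last by move=> w; have [i [-> /andP [a1 a2]]] := ev w.
move=> q hq; have [i ->] := In_map_ex hq; exact: mA.
Qed.
End PartD.
Section PartC.
Context (d : measure_display) (T : measurableType d) (R : realType).
Context (L : (T -> R) -> R)
  (Ladd : forall x y, bnd x -> bnd y -> L (fun w => x w + y w) = L x + L y)
  (Lsc : forall (k : R) x, bnd x -> L (fun w => k * x w) = k * L x)
  (Lpos : forall x, bnd x -> (forall w, 0 <= x w) -> 0 <= L x)
  (L1 : L (fun _ => 1) = 1).

Definition Pm (A : set T) : R := L (fun w => \1_A w).

Lemma bnd_ind (A : set T) : bnd (fun w => (\1_A w : R)).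
Proof. by exists 1 => w; rewrite indicE; case: (w \in A); rewrite ?normr1 ?normr0. Qed.

Lemma L0 : L (fun _ => 0) = 0.
Proof.
by have h := Lsc 0 (@bndC _ T R 1); rewrite !mul0r in h.
Qed.

Lemma Lmono x y : bnd x -> bnd y -> (forall w, x w <= y w) -> L x <= L y.
Proof.
move=> bx by_ xy.
have bnx := bndZ (-1) bx.
have := Lpos (bndD by_ bnx) _; rewrite Ladd // Lsc //.
move=> /(_ _) h; rewrite -subr_ge0; rewrite mulN1r in h; apply: h.
by move=> w; rewrite mulN1r subr_ge0.
Qed.

Lemma Lcst x m : bnd x -> L (fun w => x w + m) = L x + m.
Proof.
move=> bx; rewrite Ladd //; last exact: bndC.
by have h := Lsc m (@bndC _ T R 1); rewrite L1 !mulr1 in h; rewrite h.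
Qed.

Lemma Pm_ba1 : ba1 Pm.
Proof.
split.
- move=> A _; apply: Lpos; first exact: bnd_ind.
  by move=> w; rewrite indicE; case: (w \in A).
- rewrite /Pm; have -> : (fun w => (\1_(@setT T) w : R)) = (fun _ => 1).
    by apply/funext => w; rewrite indicE mem_set.
  exact: L1.
- move=> A B _ _ AB; rewrite /Pm -Ladd; try exact: bnd_ind.
  congr L; apply/funext => w; rewrite !indicE.
  have [wA|wA] := boolP (w \in A); have [wB|wB] := boolP (w \in B).
  + exfalso; move: wA wB; rewrite !inE => wA wB.
    by have : (A `&` B) w by []; rewrite AB.
  + by rewrite mem_set ?addr0 //; left; move: wA; rewrite inE.
  + by rewrite mem_set ?add0r //; right; move: wB; rewrite inE.
  + rewrite memNset ?addr0 //; move=> [h|h].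
      by move: wA; rewrite mem_set.
    by move: wB; rewrite mem_set.
Qed.

Lemma simple_eval_cons (q : R * set T) s :
  simple_eval (q :: s) = (fun w => q.1 * \1_(q.2) w + simple_eval s w).
Proof. by apply/funext => w; rewrite /simple_eval big_cons. Qed.

Lemma simple_eval_nil : simple_eval [::] = (fun _ : T => (0:R)).
Proof. by apply/funext => w; rewrite /simple_eval big_nil. Qed.

Lemma bnd_simple (s : seq (R * set T)) : bnd (simple_eval s).
Proof.
elim: s => [|q s IH]; first by rewrite simple_eval_nil; exact: bndC.
rewrite simple_eval_cons; apply: bndD => //; apply: bndZ; exact: bnd_ind.
Qed.

Lemma simple_intE s : simple_int Pm s = L (simple_eval s).
Proof.
elim: s => [|q s IH]; first by rewrite simple_eval_nil L0 /simple_int big_nil.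
rewrite simple_eval_cons Ladd; last exact: bnd_simple.
  rewrite (Lsc _ (bnd_ind q.2)) {1}/simple_int big_cons; congr (_ + _); exact: IH.
by apply: bndZ; exact: bnd_ind.
Qed.
End PartC.
Section PartE.
Context (d : measure_display) (T : measurableType d) (R : realType).
Implicit Types (P : set T -> R) (s : seq (R * set T)).

Lemma mem_In (A : eqType) (x : A) (l : seq A) : x \in l -> List.In x l.
Proof.
elim: l => //= a l IH; rewrite in_cons => /orP [/eqP ->|h]; [by left|by right; exact: IH].
Qed.

Lemma ba1_set0 P : ba1 P -> P set0 = 0.
Proof.
move=> [_ _ hadd]; have := hadd set0 set0 measurable0 measurable0 (setI0 _).
rewrite setU0 => h; lra.
Qed.

Lemma Psplit P B A : ba1 P -> measurable B -> measurable A ->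
  P B = P (B `&` A) + P (B `&` ~` A).
Proof.
move=> hP mB mA; have [_ _ hadd] := hP.
rewrite -hadd; first last.
- by apply/seteqP; split => w //= [[_ h1] [_ h2]].
- by apply: measurableI => //; exact: measurableC.
- exact: measurableI.
congr P; apply/seteqP; split => w /=.
  by move=> Bw; have [Aw|nAw] := pselect (A w); [left|right].
by case=> [[]|[]].
Qed.

Lemma ba1_le P s B (k : R) : ba1 P -> measurable B ->
  (forall q, List.In q s -> measurable q.2) ->
  (forall w, B w -> simple_eval s w <= k) ->
  \sum_(q <- s) q.1 * P (q.2 `&` B) <= k * P B.
Proof.
move=> hP; elim: s B k => [|[c A] s IH] B k mB ms hs.
  rewrite big_nil.
  have [[w Bw]|nB] := pselect (exists w, B w).
    have := hs w Bw; rewrite simple_eval_nil => k0.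
    by apply: mulr_ge0 => //; case: hP => + _ _; apply.
  have -> : B = set0 by apply/seteqP; split => w // Bw; apply: nB; exists w.
  by rewrite ba1_set0 // mulr0.
have mA : measurable A by apply: (ms (c, A)); left.
have ms' q : List.In q s -> measurable q.2 by move=> h; apply: ms; right.
have mB1 : measurable (B `&` A) by exact: measurableI.
have mB2 : measurable (B `&` ~` A) by apply: measurableI => //; exact: measurableC.
have h1 := IH (B `&` A) (k - c) mB1 ms'.
have h2 := IH (B `&` ~` A) k mB2 ms'.
have e1 : forall w, (B `&` A) w -> simple_eval s w <= k - c.
  move=> w [Bw Aw]; have := hs w Bw; rewrite simple_eval_cons /= indicE mem_set // mulr1.
  lra.
have e2 : forall w, (B `&` ~` A) w -> simple_eval s w <= k.
  move=> w [Bw nAw]; have := hs w Bw; rewrite simple_eval_cons /= indicE memNset // mulr0.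
  by rewrite add0r.
have {h1 e1} h1 := h1 e1; have {h2 e2} h2 := h2 e2.
rewrite big_cons /= (Psplit hP mB mA).
have -> : \sum_(q <- s) q.1 * P (q.2 `&` B) =
    \sum_(q <- s) q.1 * P (q.2 `&` (B `&` A)) + \sum_(q <- s) q.1 * P (q.2 `&` (B `&` ~` A)).
  rewrite -big_split /=; apply: eq_big_seq => q qs.
  rewrite -mulrDr !setIA -Psplit //; apply: measurableI => //.
  by apply: ms'; exact: mem_In.
have -> : A `&` B = B `&` A by rewrite setIC.
rewrite mulrBl in h1; rewrite mulrDr; lra.
Qed.
End PartE.
Section PartE2.
Context (d : measure_display) (T : measurableType d) (R : realType).
Implicit Types (P : set T -> R) (s : seq (R * set T)).

Lemma simple_int_le P s M : ba1 P -> (forall q, List.In q s -> measurable q.2) ->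
  (forall w, simple_eval s w <= M) -> simple_int P s <= M.
Proof.
move=> hP ms hs; have := ba1_le hP measurableT ms (fun w _ => hs w).
have [_ -> _] := hP; rewrite mulr1 /simple_int.
by under eq_bigr do rewrite setIT.
Qed.

Lemma below_ex (X : T -> R) M : (forall w, - M <= X w) ->
  simple_below X [:: (- M, setT)].
Proof.
move=> hM; split; first by move=> q [<-|//]; exact: measurableT.
move=> w; rewrite /simple_eval big_cons big_nil /= indicE mem_set // mulr1 addr0.
exact: hM.
Qed.

Lemma has_sup_E P (X : T -> R) : ba1 P -> Bb X ->
  has_sup [set simple_int P s | s in simple_below X].
Proof.
move=> hP [_ /bnd_le [M hM]]; split.
  by exists (simple_int P [:: (- M, setT)]), [:: (- M, setT)] => //;
    apply: below_ex => w; case: (hM w).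
exists M => _ [s [ms hs] <-]; apply: simple_int_le => // w.
by apply: le_trans (hs w) _; case: (hM w).
Qed.

Lemma expect_mono P (X Y : T -> R) : ba1 P -> Bb X -> Bb Y ->
  (forall w, X w <= Y w) -> expect P X <= expect P Y.
Proof.
move=> hP bX bY XY; have [ne _] := has_sup_E hP bX.
apply: ge_sup => // _ [s [ms hs] <-].
apply: sup_upper_bound; first exact: has_sup_E.
by exists s => //; split => // w; apply: le_trans (hs w) (XY w).
Qed.
End PartE2.
Section PartC2.
Context (d : measure_display) (T : measurableType d) (R : realType).
Context (L : (T -> R) -> R)
  (Ladd : forall x y, bnd x -> bnd y -> L (fun w => x w + y w) = L x + L y)
  (Lsc : forall (k : R) x, bnd x -> L (fun w => k * x w) = k * L x)
  (Lpos : forall x, bnd x -> (forall w, 0 <= x w) -> 0 <= L x)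
  (L1 : L (fun _ => 1) = 1).

Lemma expect_L (X : T -> R) : Bb X -> expect (Pm L) X = L X.
Proof.
move=> bX; have hs := has_sup_E (Pm_ba1 Ladd Lpos L1) bX.
have [mX [M hM]] := bX.
have bX' : bnd X by exists M.
have ub : ubound [set simple_int (Pm L) s | s in simple_below X] (L X).
  move=> _ [s [ms hs'] <-]; rewrite (simple_intE Ladd Lsc).
  by apply: (Lmono Ladd Lsc Lpos) => //; exact: bnd_simple.
apply/eqP; rewrite eq_le; apply/andP; split.
  by apply: ge_sup => //; case: hs.
apply/ler_addgt0Pr => e e0.
have [s [sb hs']] := approx mX bX' e0.
rewrite -lerBlDr; apply: le_trans (_ : simple_int (Pm L) s <= _).
  rewrite (simple_intE Ladd Lsc) -(Lcst Ladd Lsc L1) //.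
  apply: (Lmono Ladd Lsc Lpos); first by apply: bndD => //; exact: bndC.
    exact: bnd_simple.
  by move=> w; have := hs' w; lra.
by apply: sup_upper_bound => //; exists s.
Qed.
End PartC2.
Section PartF.
Context (d : measure_display) (T : measurableType d) (R : realType)
  (C : set (T -> R)) (H : (T -> R) -> R).
Context (hC : linear_subspace_with_constants C)
  (hH : sublinear_premium_principle C H).

Lemma Bb_bnd (X : T -> R) : Bb X -> bnd X.
Proof. by case=> _ [M hM]; exists M. Qed.

Lemma L_exists (X0 : T -> R) : bnd X0 -> exists L : (T -> R) -> R,
  [/\ (forall x y, bnd x -> bnd y -> L (fun w => x w + y w) = L x + L y),
      (forall (k : R) x, bnd x -> L (fun w => k * x w) = k * L x),
      (forall x, bnd x -> (forall w, 0 <= x w) -> 0 <= L x),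
      L (fun _ => 1) = 1 &
      (forall x, bnd x -> L x <= p C H x) /\ L X0 = p C H X0].
Proof.
move=> bX0.
have [L [Ladd Lsc Ldom LX0]] := @hahn_banach T R (@bnd _ T R) (p C H) (@bndC _ T R 0)
  (@bndD _ T R) (@bndZ _ T R) (p_sub hC hH) (p_hom hC hH) (p0 hC hH) X0 bX0.
have Lneg x : bnd x -> L (fun w => -1 * x w) = - L x by move=> bx; rewrite Lsc // mulN1r.
exists L; split; [exact: Ladd|exact: Lsc| | |by split].
- move=> x bx x0; rewrite -oppr_le0 -Lneg //.
  have h1 := Ldom _ (bndZ (-1) bx); apply: (Order.POrderTheory.le_trans h1).
  rewrite -(p0 hC hH); apply: (p_mono hC hH); [exact: bndZ|exact: bndC|].
  by move=> w; rewrite mulN1r oppr_le0.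
- apply/eqP; rewrite eq_le; apply/andP; split.
    by apply: le_trans (Ldom _ (@bndC _ T R 1)) _; rewrite (p_cst hC hH).
  have := Ldom _ (bndZ (-1) (@bndC _ T R 1)); rewrite Lneg; last exact: bndC.
  have -> : (fun _ : T => -1 * 1) = (fun _ => (-1 : R)) by apply/funext => w; rewrite mulr1.
  rewrite (p_cst hC hH); lra.
Qed.

Lemma p_hom0 (X : T -> R) (t : R) : bnd X -> 0 <= t ->
  p C H (fun w => t * X w) = t * p C H X.
Proof.
move=> bX; rewrite le_eqVlt => /orP [/eqP <-|t0]; last exact: p_hom.
have -> : (fun w => 0 * X w) = (fun _ => 0) by apply/funext => w; rewrite mul0r.
by rewrite p0 // mul0r.
Qed.

Lemma main_result :
  (forall X, Bb X -> RMax C H X \is a fin_num) /\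
  coherent_risk_measure (fun X => fine (RMax C H X)) /\
  (forall X, Bb X ->
     (exists2 P, Pset C H P & (expect P X)%:E = RMax C H X) /\
     (forall P, Pset C H P -> ((expect P X)%:E <= RMax C H X)%E)).
Proof.
have fin X : Bb X -> RMax C H X \is a fin_num by move=> /Bb_bnd; exact: RMax_fin.
split => //; split.
  split.
  - by move=> X Y /Bb_bnd bX /Bb_bnd bY; exact: p_mono.
  - by move=> X m /Bb_bnd bX; exact: p_tr.
  - exact: p0.
  - move=> X Y l /Bb_bnd bX /Bb_bnd bY /andP [l0 l1].
    apply: le_trans (p_sub hC hH (bndZ l bX) (bndZ (1 - l) bY)) _.
    rewrite !p_hom0 //; lra.
  - by move=> X l /Bb_bnd bX l0; exact: p_hom.
move=> X bbX; have bX := Bb_bnd bbX; split.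
  have [L [Ladd Lsc Lpos L1 [Ldom LX]]] := L_exists bX.
  exists (Pm L).
    split; first exact: Pm_ba1.
    move=> X0 CX0; rewrite (expect_L Ladd Lsc Lpos L1); last by case: hC => + _ _ _; apply.
    apply: le_trans (Ldom _ (Cbnd hC CX0)) _; exact: p_H.
  by rewrite (expect_L Ladd Lsc Lpos L1) // LX /p fineK //; exact: fin.
move=> P [hP hPC]; rewrite -(fineK (fin _ bbX)) lee_fin.
apply: (p_ge hC hH) => // X0 CX0 hX.
have bbX0 : Bb X0 by case: hC => + _ _ _; apply.
apply: le_trans (hPC _ CX0); exact: expect_mono.
Qed.
End PartF.

Theorem corollary3p3 (d : measure_display) (T : measurableType d) (R : realType)
  (C : set (T -> R)) (H : (T -> R) -> R) :
  linear_subspace_with_constants C ->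
  sublinear_premium_principle C H ->
  (forall X, Bb X -> RMax C H X \is a fin_num) /\
  coherent_risk_measure (fun X => fine (RMax C H X)) /\
  (forall X, Bb X ->
     (exists2 P, Pset C H P & (expect P X)%:E = RMax C H X) /\
     (forall P, Pset C H P -> ((expect P X)%:E <= RMax C H X)%E)).
Proof. by move=> hC hH; exact: main_result. Qed.
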